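(* Let $\mathbb{F}$ be any field and let $n\ge 1$, $0\le k\le n$, $s\ge 0$ be integers. The number of distinct zero-patterns of $(n,k,s)$-matrices over $\mathbb{F}$ is at most $\binom{n}{k}^2\cdot n^{20ks/n}$.
   Context: An $(n,k,s)$-matrix over $\mathbb{F}$ is a matrix $M\in\mathbb{F}^{n\times n}$ of rank $k$ with exactly $s$ nonzero entries, which contains rows $R_{i_1},\dots,R_{i_k}$ and columns $C_{j_1},\dots,C_{j_k}$ such that $R_{i_1},\dots,R_{i_k}$ is a basis of the row space of $M$, $C_{j_1},\dots,C_{j_k}$ is a basis of the column space of $M$, and the total number of nonzero entries in the $2k$ vectors $R_{i_1},\dots,R_{i_k},C_{j_1},\dots,C_{j_k}$ is at most $4ks/n$. The zero-pattern of a matrix $M\in\mathbb{F}^{n\times n}$ is the matrix $Z\in\{0,*\}^{n\times n}$ with $Z_{i,j}=0$ if $M_{i,j}=0$ and $Z_{i,j}=*$ otherwise. *)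

(* Defs.v *)
From HB Require Import structures.
From mathcomp Require Import all_boot all_order all_algebra.
Set Implicit Arguments. Unset Strict Implicit. Unset Printing Implicit Defensive.
Import Order.TTheory GRing.Theory Num.Theory.
Local Open Scope ring_scope.

Definition nnz (F : fieldType) (m p : nat) (A : 'M[F]_(m, p)) : nat :=
  #|[set ij : 'I_m * 'I_p | A ij.1 ij.2 != 0]|.

(* The rows R_{r t} (t < k) form a basis of the row space,
   the columns C_{c t} (t < k) form a basis of the column space, and the
   total number of nonzero entries in these 2k vectors is <= 4ks/n, written
   multiplied out as (total) * n <= 4 k s. *)
Definition nks_matrix (F : fieldType) (n k s : nat) (M : 'M[F]_n) : Prop :=
  [/\ \rank M = k, nnz M = s &
   exists (r c : 'I_k -> 'I_n),
     [/\ row_free (rowsub r M), (rowsub r M == M)%MS,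
         row_free (colsub c M)^T, ((colsub c M)^T == M^T)%MS &
         ((\sum_(t < k) (nnz (row (r t) M) + nnz (col (c t) M))) * n
            <= 4 * k * s)%N]].

(* zero-pattern: true stands for '*', false for '0' *)
Definition zero_pattern (F : fieldType) (n : nat) (M : 'M[F]_n) : 'M[bool]_n :=
  \matrix_(i, j) (M i j != 0).

(* Main.v *)
Require Import Defs.
From HB Require Import structures.
From mathcomp Require Import all_boot all_order all_algebra.
From mathcomp Require Import mpoly.
From mathcomp Require Import zify.
From Stdlib Require Import ClassicalEpsilon.

Module Aux.
Set Implicit Arguments. Unset Strict Implicit. Unset Printing Implicit Defensive.
Import Order.TTheory GRing.Theory Num.Theory.
Local Open Scope ring_scope.

Section Dle.
Variables (R : comRingType) (N : nat).
Definition dle (d : nat) (p : {mpoly R[N]}) :=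
  forall m, m \in msupp p -> (mdeg m <= d)%N.

Lemma dle_mono d d' p : (d <= d')%N -> dle d p -> dle d' p.
Proof. by move=> h hp m /hp /leq_trans; apply. Qed.

Lemma dleC d c : dle d c%:MP.
Proof. by move=> m; rewrite msuppC; case: eqP => // _; rewrite inE => /eqP ->; rewrite mdeg0. Qed.

Lemma dle0 d : dle d 0.
Proof. by move=> m; rewrite msupp0. Qed.

Lemma dleX i : dle 1 'X_i.
Proof. by move=> m; rewrite msuppX inE => /eqP ->; rewrite mdeg1. Qed.

Lemma dleD d p q : dle d p -> dle d q -> dle d (p + q).
Proof. by move=> hp hq m /msuppD_le; rewrite mem_cat => /orP [/hp|/hq]. Qed.

Lemma dleZ d c p : dle d p -> dle d (c *: p).
Proof. by move=> hp m /msuppZ_le /hp. Qed.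

Lemma dleM d1 d2 p q : dle d1 p -> dle d2 q -> dle (d1 + d2) (p * q).
Proof.
move=> hp hq m /msuppM_le /allpairsP [[m1 m2] /= [h1 h2 ->]].
by rewrite mdegD leq_add ?hp ?hq.
Qed.

Lemma dle_sum (I : Type) (r : seq I) (P : pred I) d (f : I -> {mpoly R[N]}) :
  (forall i, P i -> dle d (f i)) -> dle d (\sum_(i <- r | P i) f i).
Proof.
move=> h; elim/big_rec: _ => [|i x Pi hx]; first exact: dle0.
by apply: dleD => //; apply: h.
Qed.

Lemma dle_prod (I : Type) (r : seq I) (P : pred I) (d : I -> nat) (f : I -> {mpoly R[N]}) :
  (forall i, P i -> dle (d i) (f i)) -> dle (\sum_(i <- r | P i) d i) (\prod_(i <- r | P i) f i).
Proof.
move=> h; elim/big_rec2: _ => [|i y x Pi hx]; first by move=> m; rewrite -mpolyC1; apply: dleC.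
by apply: dleM => //; apply: h.
Qed.

Lemma dle_det n' (Q : 'M[{mpoly R[N]}]_n') : (forall a b, dle 1 (Q a b)) -> dle n' (\det Q).
Proof.
move=> h; rewrite /determinant; apply: dle_sum => s _.
rewrite -[n' in dle n' _]add0n; apply: dleM.
  by rewrite -signr_odd; case: (odd _); rewrite ?expr1 ?expr0 -?mpolyC1 -?mpolyCN; apply: dleC.
apply: (@dle_mono (\sum_(i < n') 1)%N); first by rewrite sum1_card card_ord.
by apply: dle_prod => i _; apply: h.
Qed.
End Dle.


Section Mono.
Variables (F : fieldType) (N D : nat).
Definition mono (u : {ffun 'I_N -> 'I_D.+1}) : 'X_{1..N} := [multinom (u i : nat) | i < N].

Lemma mono_inj : injective mono.
Proof.
move=> u v h; apply/ffunP => i; apply/val_inj.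
by have := congr1 (fun m : 'X_{1..N} => m i) h; rewrite /= !mnmE.
Qed.

Lemma eval_mono (p : {mpoly F[N]}) x : dle D p ->
  p.@[x] = \sum_(u : {ffun 'I_N -> 'I_D.+1}) p@_(mono u) * \prod_i x i ^+ u i.
Proof.
move=> hp; rewrite mevalE.
pose G (m : 'X_{1..N}) := p@_m * \prod_i x i ^+ m i.
transitivity (\sum_(u : {ffun 'I_N -> 'I_D.+1}) G (mono u)); last first.
  by apply: eq_bigr => u _; rewrite /G; congr (_ * _); apply: eq_bigr => i _; rewrite mnmE.
rewrite (bigID (fun u => mono u \in msupp p)) /= [X in _ + X]big1 ?addr0; last first.
  by move=> u /memN_msupp_eq0; rewrite /G => ->; rewrite mul0r.
set s := [seq u <- index_enum {ffun 'I_N -> 'I_D.+1} | mono u \in msupp p].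
transitivity (\sum_(m <- map mono s) G m); last first.
  by rewrite big_map /s big_filter.
rewrite /G; apply: perm_big; apply: uniq_perm.
- exact: msupp_uniq.
- by rewrite map_inj_uniq ?filter_uniq ?index_enum_uniq //; apply: mono_inj.
move=> m; apply/idP/idP; last first.
  by case/mapP => u; rewrite mem_filter => /andP [h _] ->.
move=> hm; apply/mapP; exists [ffun i => inord (m i)].
  rewrite mem_filter mem_index_enum andbT.
  suff -> : mono [ffun i => inord (m i)] = m by [].
  apply/mnmP => i; rewrite mnmE ffunE inordK // ltnS.
  apply: leq_trans (hp _ hm); rewrite mdegE (bigD1 i) //= leq_addr //.
apply/mnmP => i; rewrite mnmE ffunE inordK // ltnS.
apply: leq_trans (hp _ hm); rewrite mdegE (bigD1 i) //= leq_addr //.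
Qed.
End Mono.


Lemma choice_fun (A B : Type) (b0 : B) (P : A -> B -> Prop) (Q : A -> Prop) :
  (forall a, Q a -> exists b, P a b) -> exists f : A -> B, forall a, Q a -> P a (f a).
Proof.
move=> h.
exists (fun a => match excluded_middle_informative (exists b, P a b) with
  | left H => proj1_sig (constructive_indefinite_description _ H) | right _ => b0 end).
move=> a Qa; case: excluded_middle_informative => [H|H].
  exact: proj2_sig (constructive_indefinite_description _ H).
by exfalso; apply: H; apply: h.
Qed.

Section RBG.
Variables (F : fieldType) (N D : nat).

Lemma rank_free_ker m n' (G : 'M[F]_(m, n')) :
  (forall v : 'rV_m, v *m G = 0 -> v = 0) -> (m <= \rank G)%N.
Proof.
move=> h; have : \rank (kermx G) = 0%N.
  apply/eqP; rewrite mxrank_eq0; apply/eqP/row_matrixP => i; rewrite row0.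
  by apply: h; apply/sub_kermxP; apply: row_sub.
by rewrite mxrank_ker => /eqP; rewrite subn_eq0.
Qed.

Lemma rbg (I T : finType) (fs : I -> {mpoly F[N]}) (pat : ('I_N -> F) -> T) (Pset : {set T}) :
  (forall S : {set I}, dle D (\prod_(i in S) fs i)) ->
  (forall x y, (forall i, ((fs i).@[x] != 0) = ((fs i).@[y] != 0)) -> pat x = pat y) ->
  (forall Z, Z \in Pset -> exists x, Z = pat x) ->
  (#|Pset| <= D.+1 ^ N)%N.
Proof.
move=> hdeg hpat hP.
have [xs hxs] := choice_fun (fun _ => 0) hP.
pose L := #|Pset|.
pose e (l : 'I_L) : T := enum_val l.
pose S l := [set i | (fs i).@[xs (e l)] != 0].
pose g l := \prod_(i in S l) fs i.
pose G : 'M[F]_L := \matrix_(l, l') (g l).@[xs (e l')].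
pose Mo := {ffun 'I_N -> 'I_D.+1}.
pose K := #|{: Mo}|.
pose Cf : 'M[F]_(L, K) := \matrix_(l, u) (g l)@_(mono (enum_val u)).
pose Ev : 'M[F]_(K, L) := \matrix_(u, l') \prod_i xs (e l') i ^+ (@enum_val Mo _ u i).
have GE : G = Cf *m Ev.
  apply/matrixP => l l'; rewrite !mxE.
  rewrite (eval_mono (D:=D) (xs (e l')) (hdeg (S l))).
  rewrite (eq_bigl (fun u => u \in {: Mo})) //.
  rewrite (big_enum_val (fun u : Mo => (g l)@_(mono u) * \prod_i xs (e l') i ^+ u i)).
  by apply: eq_bigr => u _; rewrite !mxE.
have hK : K = (D.+1 ^ N)%N by rewrite /K card_ffun !card_ord.
rewrite -hK; apply: (@leq_trans (\rank G)); last first.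
  by rewrite GE; apply: leq_trans (mxrankM_maxl _ _) (rank_leq_col _).
apply: rank_free_ker => v hv; apply/eqP/negPn/negP => hv0.
have [l1 hl1] : exists l, v 0 l != 0.
  apply/existsP; move: hv0; apply: contraNT; rewrite negb_exists => /forallP h.
  by apply/eqP/rowP => l; rewrite mxE; have := h l; rewrite negbK => /eqP.
case: (@arg_minnP _ l1 (fun l => v 0 l != 0) (fun l => #|S l|) hl1) => l hl hmin.
have := congr1 (fun A : 'rV_L => A 0 l) hv; rewrite !mxE (bigD1 l) //= big1 ?addr0.
  apply/eqP; rewrite mulf_neq0 // mxE /g rmorph_prod; apply/prodf_neq0 => i.
  by rewrite inE.
move=> j hjl; have [->|hj] := eqVneq (v 0 j) 0; first by rewrite mul0r.
rewrite mxE /g rmorph_prod; apply/eqP; rewrite mulf_eq0; apply/orP; right.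
apply/negPn/negP => /prodf_neq0 hall.
have sub : S j \subset S l.
  by apply/subsetP => i hi; rewrite inE; apply: hall.
have eqS : S j = S l.
  apply/eqP; rewrite eqEcard sub /=; exact: hmin.
have hej : e j = e l.
  rewrite /e /= (hxs _ (enum_valP j)) (hxs _ (enum_valP l)); apply: hpat => i.
  by have := congr1 (fun X : {set I} => i \in X) eqS; rewrite /= !inE.
by move: hjl; rewrite (enum_val_inj hej) eqxx.
Qed.
End RBG.


Section Key.
Variable F : fieldType.

Lemma rank_rowsub m m' n (f : 'I_m' -> 'I_m) (A : 'M[F]_(m, n)) : (\rank (rowsub f A) <= \rank A)%N.
Proof. by rewrite rowsubE mxrankM_maxr. Qed.

Lemma rank_colsub m n n' (f : 'I_n' -> 'I_n) (A : 'M[F]_(m, n)) : (\rank (colsub f A) <= \rank A)%N.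
Proof.
have -> : colsub f A = (rowsub f A^T)^T by apply/matrixP => a b; rewrite !mxE.
by rewrite mxrank_tr -[X in (_ <= X)%N]mxrank_tr rank_rowsub.
Qed.

Variables (n k : nat) (M : 'M[F]_n) (r c : 'I_k -> 'I_n) (i j : 'I_n).
Definition extr (a : 'I_k.+1) := if unlift ord_max a is Some t then r t else i.
Definition extc (b : 'I_k.+1) := if unlift ord_max b is Some t then c t else j.
Definition Bmat : 'M[F]_k.+1 := \matrix_(a, b) M (extr a) (extc b).
Definition Qmat : 'M[F]_k.+1 :=
  \matrix_(a, b) if (a == ord_max) && (b == ord_max) then 0 else M (extr a) (extc b).

Lemma key : \rank M = k -> row_free (rowsub r M) -> (M^T <= (colsub c M)^T)%MS ->
  (M i j != 0) = (\det Qmat != 0).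
Proof.
move=> rkM rfr /submxP [Dm hD].
have detB : \det Bmat = 0.
  apply/eqP; apply: contraT => hB.
  have : (\rank Bmat <= \rank M)%N.
    have -> : Bmat = rowsub extr (colsub extc M) by apply/matrixP => a b; rewrite !mxE.
    exact: leq_trans (rank_rowsub _ _) (rank_colsub _ _).
  have hu : Bmat \in unitmx by rewrite unitmxE unitfE.
  by rewrite (mxrank_unit hu) rkM ltnn.
pose A := rowsub r (colsub c M).
have detA : \det A != 0.
  have hM : M = colsub c M *m Dm^T by apply: trmx_inj; rewrite trmx_mul trmxK -hD.
  have : rowsub r M = A *m Dm^T by rewrite [in LHS]hM [LHS]rowsubE mulmxA -rowsubE.
  move=> hr; move: rfr; rewrite /row_free hr => /eqP hk.
  have : (k <= \rank A)%N by rewrite -[X in (X <= _)%N]hk mxrankM_maxl.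
  rewrite -unitfE -unitmxE -row_free_unit /row_free eqn_leq rank_leq_row => ->.
  done.
have hBQ : \det Bmat = \det Qmat + M i j * \det A.
  rewrite (expand_det_row Bmat ord_max) (expand_det_row Qmat ord_max).
  rewrite (bigD1 ord_max) //= [X in _ = X + _](bigD1 ord_max) //=.
  have cofE b : cofactor Bmat ord_max b = cofactor Qmat ord_max b.
    rewrite /cofactor; congr (_ * \det _); apply/matrixP => a b'; rewrite !mxE.
    by rewrite [lift ord_max a == _]eq_sym (negbTE (neq_lift _ _)).
  rewrite !mxE eqxx /= mul0r add0r.
  have -> : \sum_(b < k.+1 | b != ord_max) Bmat ord_max b * cofactor Bmat ord_max b =
            \sum_(b < k.+1 | b != ord_max) Qmat ord_max b * cofactor Qmat ord_max b.
    by apply: eq_bigr => b hb; rewrite cofE !mxE eqxx /= (negbTE hb).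
  rewrite addrC; congr (_ + _).
  rewrite /extr /extc unlift_none /cofactor; congr (_ * _).
  rewrite -signr_odd /= addnn odd_double expr0 mul1r; congr (\det _).
  by apply/matrixP => a b; rewrite !mxE /extr /extc !liftK.
move: hBQ; rewrite detB => /eqP; rewrite eq_sym addr_eq0 => /eqP ->.
by rewrite oppr_eq0 mulf_eq0 negb_or detA andbT.
Qed.
End Key.


Section Defs2.
Variables (F : fieldType) (n k A : nat) (d : 'I_n).
Definition encI (I : {set 'I_n}) (t : 'I_k) : 'I_n := nth d (enum I) t.
Definition Param := ({set 'I_n} * {set 'I_n} * {ffun 'I_A -> option ('I_n * 'I_n)})%type.
Definition varp (phi : {ffun 'I_A -> option ('I_n * 'I_n)}) (q : 'I_n * 'I_n) : {mpoly F[A]} :=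
  if [pick t | phi t == Some q] is Some t then 'X_t else 0.
Definition Qp (p : Param) (i j : 'I_n) : 'M[{mpoly F[A]}]_k.+1 :=
  \matrix_(a, b) if (a == ord_max) && (b == ord_max) then 0
    else varp p.2 (extr (encI p.1.1) i a, extc (encI p.1.2) j b).
Definition fsp (p : Param) (q : 'I_n * 'I_n) : {mpoly F[A]} :=
  if (q.1 \in p.1.1) || (q.2 \in p.1.2) then 1 else \det (Qp p q.1 q.2).
Definition Uset (phi : {ffun 'I_A -> option ('I_n * 'I_n)}) : {set 'I_n * 'I_n} :=
  [set q | [exists t, phi t == Some q]].
Definition patf (p : Param) (x : 'I_A -> F) : 'M[bool]_n :=
  \matrix_(i, j) if (i \in p.1.1) || (j \in p.1.2) then (i, j) \in Uset p.2
    else (fsp p (i, j)).@[x] != 0.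

Lemma fsp_deg (p : Param) : #|p.1.1| = k -> #|p.1.2| = k -> forall S : {set 'I_n * 'I_n},
  dle ((n - k) * (n - k) * k.+1)%N (\prod_(q in S) fsp p q).
Proof.
move=> hI hJ S.
pose dg (q : 'I_n * 'I_n) := if (q.1 \in p.1.1) || (q.2 \in p.1.2) then 0%N else k.+1.
apply: (@dle_mono _ _ (\sum_(q in S) dg q)%N).
  apply: (@leq_trans (\sum_q dg q)%N).
    rewrite [X in (_ <= X)%N](bigID (mem S)) /=; exact: leq_addr.
  rewrite (bigID (mem (setX (~: p.1.1) (~: p.1.2)))) /=.
  rewrite (eq_bigr (fun _ => k.+1)); last first.
    by move=> [a b]; rewrite in_setX !inE /dg /= => /andP [/negbTE -> /negbTE ->].
  rewrite sum_nat_const.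
  rewrite big1 ?addn0; last first.
    by move=> [a b]; rewrite in_setX !inE /dg /= negb_and !negbK => /orP [] ->; rewrite ?orbT.
  have hc (X : {set 'I_n}) : #|X| = k -> #|~: X| = (n - k)%N.
    by move=> hX; rewrite cardsCs setCK card_ord hX.
  by rewrite cardsX !hc.
apply: dle_prod => q _; rewrite /dg /fsp; case: ifP => _.
  by move=> m; rewrite -mpolyC1; apply: dleC.
apply: dle_det => a b; rewrite mxE; case: ifP => _; first exact: dle0.
rewrite /varp; case: pickP => [t _|_]; [exact: dleX | exact: dle0].
Qed.
End Defs2.


Lemma card_big_le (I T : finType) (B : I -> {set T}) : (#|\bigcup_i B i| <= \sum_i #|B i|)%N.
Proof.
elim/big_rec2: _ => [|i y X _ h]; first by rewrite cards0.
by rewrite cardsU (leq_trans (leq_subr _ _)) // leq_add2l.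
Qed.

Section Real.
Variable F : fieldType.

Lemma rowfree_inj m m' n' (f : 'I_m' -> 'I_m) (X : 'M[F]_(m, n')) :
  row_free (rowsub f X) -> injective f.
Proof.
move=> h t1 t2 e.
have : delta_mx 0 t1 *m rowsub f X = delta_mx (0 : 'I_1) t2 *m rowsub f X.
  by rewrite -!rowE; apply/rowP => b; rewrite !mxE e.
move/(row_free_inj h) => /matrixP /(_ 0 t1); rewrite !mxE !eqxx /=.
by case: eqP => // _ /eqP; rewrite oner_eq0.
Qed.

Lemma rowsub_le m m1 m2 n' (f : 'I_m1 -> 'I_m) (g : 'I_m2 -> 'I_m) (X : 'M[F]_(m, n')) :
  (forall t, exists u, f t = g u) -> (rowsub f X <= rowsub g X)%MS.
Proof.
move=> h; apply/row_subP => t; have [u hu] := h t.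
have -> : row t (rowsub f X) = row u (rowsub g X) by apply/rowP => b; rewrite !mxE hu.
exact: row_sub.
Qed.
End Real.

Section Realize.
Variables (F : fieldType) (n k s : nat) (d : 'I_n).
Hypothesis hn : (0 < n)%N.
Local Notation A := (4 * k * s %/ n)%N.

Lemma realize (M : 'M[F]_n) : nks_matrix k s M ->
  exists p : Param n A, [/\ #|p.1.1| = k, #|p.1.2| = k &
     exists x, zero_pattern M = @patf F n k A d p x].
Proof.
case=> rkM _ [r [c [rfr _ rfc heqC hsum]]].
have rinj := rowfree_inj rfr.
have hcT : (colsub c M)^T = rowsub c M^T by apply/matrixP => a b; rewrite !mxE.
have cinj : injective c by apply: (@rowfree_inj _ _ _ _ c M^T); rewrite -hcT.
set I := r @: [set: 'I_k]; set J := c @: [set: 'I_k].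
have hI : #|I| = k by rewrite card_imset // cardsT card_ord.
have hJ : #|J| = k by rewrite card_imset // cardsT card_ord.
set U := [set q : 'I_n * 'I_n | (M q.1 q.2 != 0) && ((q.1 \in I) || (q.2 \in J))].
have hU : (#|U| <= A)%N.
  rewrite leq_divRL //; apply: leq_trans hsum; rewrite leq_mul2r; apply/orP; right.
  pose Rs (t : 'I_k) := [set q : 'I_n * 'I_n | (q.1 == r t) && (M q.1 q.2 != 0)].
  pose Cs (t : 'I_k) := [set q : 'I_n * 'I_n | (q.2 == c t) && (M q.1 q.2 != 0)].
  apply: (@leq_trans #|\bigcup_t (Rs t :|: Cs t)|).
    apply: subset_leq_card; apply/subsetP => [[a b]]; rewrite inE /= => /andP [hab].
    case/orP => [/imsetP [t _ ha]|/imsetP [t _ hb]]; apply/bigcupP; exists t => //;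
      by rewrite !inE /= -?ha -?hb eqxx hab ?orbT.
  apply: leq_trans (card_big_le _) _; apply: leq_sum => t _.
  rewrite (leq_trans (leq_card_setU _ _)) //; apply: leq_add.
    apply: (leq_trans _ (leq_imset_card (fun ij : 'I_1 * 'I_n => (r t, ij.2)) _)).
    apply: subset_leq_card; apply/subsetP => [[a b]]; rewrite inE /= => /andP [/eqP -> hab].
    by apply/imsetP; exists (0, b) => //; rewrite inE /= mxE.
  apply: (leq_trans _ (leq_imset_card (fun ij : 'I_n * 'I_1 => (ij.1, c t)) _)).
  apply: subset_leq_card; apply/subsetP => [[a b]]; rewrite inE /= => /andP [/eqP -> hab].
  by apply/imsetP; exists (a, 0) => //; rewrite inE /= mxE.
pose phi : {ffun 'I_A -> option ('I_n * 'I_n)} := [ffun t : 'I_A => nth None (map Some (enum U)) t].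
have hUs : Uset phi = U.
  apply/setP => q; rewrite /Uset inE; apply/idP/idP => [/existsP [t /eqP]|hq].
    rewrite /phi ffunE; case: (ltnP t (size (map Some (enum U)))) => ht; last first.
      by rewrite nth_default.
    have ht' : (t < size (enum U))%N by rewrite -(size_map Some).
    rewrite (nth_map q); last exact: ht'.
    move=> -[<-].
    rewrite -mem_enum; exact: mem_nth.
  have hi : (index q (enum U) < A)%N.
    by apply: leq_trans hU; rewrite cardE index_mem mem_enum.
  have hq' : q \in enum U by rewrite mem_enum.
  apply/existsP; exists (Ordinal hi); rewrite /phi ffunE /=.
  rewrite (nth_map q); first by rewrite nth_index.
  by rewrite index_mem.
pose x (t : 'I_A) := if phi t is Some q then M q.1 q.2 else 0.
have hvar q : (q.1 \in I) || (q.2 \in J) -> (varp F phi q).@[x] = M q.1 q.2.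
  move=> hq; rewrite /varp; case: pickP => [t /eqP ht|hn0].
    by rewrite mevalXU /x ht.
  rewrite meval0; apply/esym/eqP; apply: contraT => hM.
  have : q \in Uset phi by rewrite hUs inE hM hq.
  by rewrite /Uset inE => /existsP [t]; rewrite hn0.
have hencI (X : {set 'I_n}) : #|X| = k ->
    (forall t, @encI n k d X t \in X) /\ (forall y, y \in X -> exists t, y = @encI n k d X t).
  move=> hX; have hs : size (enum X) = k by rewrite -cardE.
  split=> [t|y hy]; first by rewrite -mem_enum /encI; apply: mem_nth; rewrite hs.
  have hi : (index y (enum X) < k)%N by rewrite -hs index_mem mem_enum.
  by exists (Ordinal hi); rewrite /encI /= nth_index // mem_enum.
have [rI rIs] := hencI _ hI; have [cJ cJs] := hencI _ hJ.
set r' := @encI n k d I; set c' := @encI n k d J.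
have rfr' : row_free (rowsub r' M).
  rewrite /row_free eqn_leq rank_leq_row /= -{1}(eqP rfr); apply: mxrankS.
  by apply: rowsub_le => t; apply: rIs; apply: imset_f.
have hC' : (M^T <= (colsub c' M)^T)%MS.
  case/andP: heqC => _ h; apply: submx_trans h _.
  have -> : (colsub c' M)^T = rowsub c' M^T by apply/matrixP => a b; rewrite !mxE.
  by rewrite hcT; apply: rowsub_le => t; apply: cJs; apply: imset_f.
exists (I, J, phi); split => //=; exists x.
apply/matrixP => i j; rewrite !mxE /=; case: ifP => hij.
  by rewrite hUs inE /= hij andbT.
rewrite /fsp /= hij.
have hQ : map_mx (meval x) (@Qp F n k A d (I, J, phi) i j) = Qmat M r' c' i j.
  apply/matrixP => a b; rewrite !mxE; case: ifP => hab; first by rewrite meval0.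
  apply: hvar => /=; rewrite /extr /extc.
  case: unliftP => [a' ha|ha]; first by rewrite rI.
  case: unliftP => [b' hb|hb]; first by rewrite cJ orbT.
  by move: hab; rewrite ha hb eqxx.
rewrite -(det_map_mx (meval x)) hQ.
exact: (key i j rkM rfr' hC').
Qed.
End Realize.


Lemma count_bound (F : fieldType) (n k s : nat) (hn : (0 < n)%N) (P : {set 'M[bool]_n}) :
  (forall Z, Z \in P -> exists M : 'M[F]_n, nks_matrix k s M /\ zero_pattern M = Z) ->
  (#|P| <= 'C(n, k) * 'C(n, k) * (n * n).+1 ^ (4 * k * s %/ n)
            * ((n - k) * (n - k) * k.+1).+1 ^ (4 * k * s %/ n))%N.
Proof.
move=> hP; set A := (4 * k * s %/ n)%N; pose d : 'I_n := Ordinal hn.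
pose SK := [set X : {set 'I_n} | #|X| == k].
pose Good : {set Param n A} := setX (setX SK SK) [set: {ffun 'I_A -> option ('I_n * 'I_n)}].
have hR : forall Z, Z \in P -> exists p : Param n A,
    (p \in Good) /\ exists x, Z = @patf F n k A d p x.
  move=> Z /hP [M [hM <-]]; have [p [h1 h2 [x hx]]] := realize d hn hM.
  exists p; split; last by exists x.
  by case: p h1 h2 hx => [[I J] phi] /= h1 h2 _; rewrite !in_setX !inE h1 h2 !eqxx.
pose p0 : Param n A := (set0, set0, [ffun => None]).
have [g hg] := choice_fun p0 hR.
rewrite -sum1_card (partition_big g (mem Good)) /=; last by move=> Z /hg [].
apply: (@leq_trans (\sum_(p in Good) ((n - k) * (n - k) * k.+1).+1 ^ A)%N).
  apply: leq_sum => p hp.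
  rewrite (eq_bigl (mem [set Z in P | g Z == p])); last by move=> Z; rewrite !inE.
  rewrite sum1_card.
  apply: (@rbg F A _ _ _ (@fsp F n k A d p) (@patf F n k A d p)).
  - move: hp; case: p => [[I J] phi]; rewrite !in_setX !inE => /andP [/andP [/eqP hI /eqP hJ] _].
    exact: fsp_deg.
  - by move=> x y h; apply/matrixP => i j; rewrite !mxE; case: ifP => // _; apply: h.
  - move=> Z; rewrite inE => /andP [hZ /eqP <-]; have [_ [x hx]] := hg Z hZ; by exists x.
rewrite sum_nat_const !cardsX cardsT card_ffun card_option card_prod !card_ord.
by rewrite /SK card_draws card_ord.
Qed.

End Aux.
Import Aux.

Lemma sq4 m k : (4 * (m * k.+1) <= (m+k).+1 * (m+k).+1)%N.
Proof.
case: (leqP m k.+1) => hm.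
  have [d hd] : exists d, k.+1 = (m + d)%N by exists (k.+1 - m); lia.
  have -> : (m + k).+1 = (m + m + d)%N by lia.
  rewrite hd; nia.
have [d hd] : exists d, m = (k.+1 + d)%N by exists (m - k.+1); lia.
rewrite hd; have -> : (k.+1 + d + k).+1 = (k.+1 + k.+1 + d)%N by lia.
nia.
Qed.
Lemma poly1 t : ((((t+2) * (t+2)).+1) * ((t+2) * ((t+3) * (t+3)) + 4) <= 4 * (t+2)^5)%N.
Proof. rewrite !expnS expn0; nia. Qed.
Lemma arith0 m k : (2 <= m + k)%N -> (((m+k) * (m+k)).+1 * (m * m * k.+1).+1 <= (m+k)^5)%N.
Proof.
move=> h.
set N := (m + k)%N.
have h1 : (4 * (m * m * k.+1).+1 <= N * (N.+1 * N.+1) + 4)%N.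
  have := sq4 m k; rewrite -/N => h2.
  have hm : (m <= N)%N by rewrite /N leq_addr.
  have : (4 * (m * (m * k.+1)) <= N * (N.+1 * N.+1))%N.
    rewrite mulnCA; apply: leq_mul => //.
  rewrite mulnA; lia.
have [t ht] : exists t, N = (t + 2)%N by exists (N - 2); lia.
rewrite -(leq_pmul2l (isT : (0 < 4)%N)) mulnCA.
apply: leq_trans (leq_mul (leqnn _) h1) _.
rewrite ht; have -> : (t + 2).+1 = (t + 3)%N by rewrite !addnS.
by have := poly1 t; rewrite mulnA.
Qed.
Lemma arith n k : (2 <= n)%N -> (k <= n)%N -> ((n * n).+1 * ((n-k) * (n-k)*k.+1).+1 <= n^5)%N.
Proof. by move=> h hk; have := arith0 (n - k) k; rewrite subnK //; apply. Qed.

Lemma exp_mono m1 m2 e : (m1 <= m2)%N -> (m1 ^ e <= m2 ^ e)%N.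
Proof. by move=> h; elim: e => // e IH; rewrite !expnS leq_mul. Qed.

Theorem lemma2p3 (F : fieldType) (n k s : nat) :
  (1 <= n)%N -> (k <= n)%N ->
  forall P : {set 'M[bool]_n},
    (forall Z, Z \in P -> exists M : 'M[F]_n, nks_matrix k s M /\ zero_pattern M = Z) ->
    (#|P| ^ n <= ('C(n, k) ^ 2) ^ n * n ^ (20 * k * s))%N.
Proof.
move=> hn hk P hP.
case: (ltnP 1 n) => hn2.
  have hb := count_bound hn hP.
  set A := (4 * k * s %/ n)%N in hb.
  have hX := arith n k hn2 hk.
  have hb2 : (#|P| <= 'C(n, k) ^ 2 * (n ^ 5) ^ A)%N.
    apply: leq_trans hb _; rewrite -mulnA -expnMn expnS expn1; apply: leq_mul => //.
    exact: exp_mono.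
  apply: leq_trans (@exp_mono _ _ n hb2) _.
  rewrite expnMn leq_mul // -!expnM; apply: leq_pexp2l => //.
  have : (A * n <= 4 * k * s)%N by apply: leq_divM.
  lia.
have n1 : n = 1%N by apply/eqP; rewrite eqn_leq hn2 hn.
subst n.
have hC : 'C(1, k) = 1%N by move: hk; rewrite leq_eqVlt ltnS leqn0 => /orP [] /eqP ->.
rewrite hC exp1n expn1 exp1n mul1n.
rewrite exp1n.
apply/card_le1_eqP => Z1 Z2 /hP [M1 [[rk1 _ _] <-]] /hP [M2 [[rk2 _ _] <-]].
have hz (M : 'M[F]_1) : zero_pattern M = (\matrix_(i, j) (\rank M != 0%N))%R.
  apply/matrixP => i j; rewrite !mxE !ord1 mxrank_eq0; congr negb.
  apply/eqP/eqP => [h|->]; last by rewrite mxE.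
  by apply/matrixP => a b; rewrite !ord1 h mxE.
by rewrite !hz rk1 rk2.
Qed.
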